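(* Let $n\geq 3$ and let $S$ be a nonempty subset of $[1,n-2]$. Writing $S+1=\{s+1:s\in S\}$, one has $$a_{\{1\}\cup(S+1)}(n+1)=a'_S(n).$$
   Context: $\Pi_n$ is the lattice of set partitions of $[n]$ ordered by refinement; a partition with $k$ blocks has rank $n-k$, and the nontrivial ranks are $1,\dots,n-2$. For $S\subseteq[1,n-2]$, the rank-selected subposet $\Pi_n(S)$ consists of the partitions whose rank lies in $S$; its maximal chains have exactly one element at each rank in $S$. $a_S(n)$ denotes the number of $S_n$-orbits on the set of maximal chains of $\Pi_n(S)$ (equivalently, the multiplicity of the trivial representation in the permutation representation of $S_n$ on these chains), and $a'_S(n)$ denotes the number of orbits of the subgroup $S_{n-1}\times S_1$ (permutations fixing $n$) on these maximal chains. *)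

(* Defs.v *)
From mathcomp Require Import all_boot all_fingroup.
Set Implicit Arguments. Unset Strict Implicit. Unset Printing Implicit Defensive.

(* A set partition of [n] is modelled as P : {set {set 'I_n}} with
   [partition P [set: 'I_n]] (blocks nonempty, disjoint, covering). *)

Definition refines (n : nat) (P Q : {set {set 'I_n}}) : bool :=
  [forall B in P, exists C in Q, B \subset C].

(* Maximal chains of the rank-selected subposet Pi_n(S), where S is a set of
   ranks (given as a predicate on nat).  A chain is encoded as a finite function
   c : rank -> partition, with c r the element of rank r (= n - #blocks) for each
   r in S, and c r = set0 (dummy) for r not in S; elements are ordered by
   refinement along increasing rank. *)
Definition chains (n : nat) (S : pred nat) : {set {ffun 'I_n -> {set {set 'I_n}}}} :=
  [set c : {ffun 'I_n -> {set {set 'I_n}}} |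
     [forall r : 'I_n,
        if S r then partition (c r) [set: 'I_n] && (#|c r| == n - r)
        else c r == set0]
     && [forall r : 'I_n, forall r' : 'I_n,
           [&& S r, S r' & r < r'] ==> refines (c r) (c r')]].

Definition act_part (n : nat) (g : {perm 'I_n}) (P : {set {set 'I_n}}) :
  {set {set 'I_n}} := [set [set g x | x in B] | B : {set 'I_n} in P].

Definition act_chain (n : nat) (g : {perm 'I_n})
  (c : {ffun 'I_n -> {set {set 'I_n}}}) : {ffun 'I_n -> {set {set 'I_n}}} :=
  [ffun r => act_part g (c r)].

Definition num_orbits (n : nat) (S : pred nat) (A : {set {perm 'I_n}}) : nat :=
  #|[set [set act_chain g c | g in A] | c in chains n S]|.

(* The subgroup S_{n-1} x S_1: permutations fixing the element n
   (the ordinal with value n-1). *)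
Definition stab_last (n : nat) : {set {perm 'I_n}} :=
  [set g : {perm 'I_n} | [forall x : 'I_n, (val x == n.-1) ==> (g x == x)]].

Definition a_S (S : pred nat) (n : nat) : nat := @num_orbits n S [set: {perm 'I_n}].
Definition a'_S (S : pred nat) (n : nat) : nat := @num_orbits n S (stab_last n).

Definition one_shift (S : pred nat) : pred nat :=
  fun r => (r == 1) || ((0 < r) && S r.-1).

(* Main.v *)
Require Import Defs.
From mathcomp Require Import all_boot all_fingroup.
From mathcomp Require Import zify.
Set Implicit Arguments. Unset Strict Implicit. Unset Printing Implicit Defensive.

Definition grefines (T : finType) (P Q : {set {set T}}) : bool :=
  [forall B in P, exists C in Q, B \subset C].
Lemma refinesE n (P Q : {set {set 'I_n}}) : refines P Q = grefines P Q.
Proof. by []. Qed.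

Section Pre.
Variables (T U : finType) (f : T -> U) (s : U -> T).
Hypothesis fK : cancel s f.

Definition pre (Q : {set {set U}}) : {set {set T}} := [set f @^-1: B | B : {set U} in Q].

Lemma preim_inj : injective (fun B : {set U} => f @^-1: B).
Proof. move=> A B /setP E; apply/setP=> u; have := E (s u); rewrite !inE fK; done. Qed.

Lemma preim_sub (A B : {set U}) : (f @^-1: A \subset f @^-1: B) = (A \subset B).
Proof.
apply/idP/idP; last exact: preimsetS.
move=> /subsetP H; apply/subsetP=> u uA; have := H (s u); rewrite !inE fK; exact.
Qed.

Lemma card_pre Q : #|pre Q| = #|Q|.
Proof. exact: card_imset preim_inj. Qed.

Lemma mem_pre Q (B : {set U}) : (f @^-1: B \in pre Q) = (B \in Q).
Proof. by rewrite /pre (mem_imset _ _ preim_inj). Qed.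

Lemma pre_inj : injective pre.
Proof. move=> P Q E; apply/setP=> B; by rewrite -!mem_pre E. Qed.

Lemma cover_pre Q : cover (pre Q) = f @^-1: cover Q.
Proof.
apply/setP=> x; rewrite inE /cover.
apply/bigcupP/bigcupP.
  by case=> B' /imsetP[B BQ ->]; rewrite inE => fx; exists B.
by case=> B BQ fx; exists (f @^-1: B); [exact: imset_f | rewrite inE].
Qed.

Lemma trivIset_pre Q : trivIset (pre Q) = trivIset Q.
Proof.
have key (A B : {set U}) : [disjoint f @^-1: A & f @^-1: B] = [disjoint A & B].
  by rewrite -!setI_eq0 -preimsetI -(preimset0 f) (inj_eq preim_inj).
apply/trivIsetP/trivIsetP => H.
  move=> A B AQ BQ AB; rewrite -key; apply: H; try exact: imset_f.
  by rewrite (inj_eq preim_inj).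
move=> A' B' /imsetP[A AQ ->] /imsetP[B BQ ->]; rewrite (inj_eq preim_inj) key.
exact: H.
Qed.

Lemma partition_pre Q : partition (pre Q) [set: T] = partition Q [set: U].
Proof.
rewrite /partition cover_pre -(preimsetT f) (inj_eq preim_inj) trivIset_pre.
by rewrite -(preimset0 f) mem_pre.
Qed.

Lemma refines_pre P Q : grefines (pre P) (pre Q) = grefines P Q.
Proof.
rewrite /grefines; apply/forall_inP/forall_inP => H B BP.
  have/exists_inP[C' /imsetP[C CQ ->] sub] := H _ (imset_f _ BP).
  by apply/exists_inP; exists C => //; rewrite -preim_sub.
case/imsetP: BP => B0 B0P ->; have/exists_inP[C CQ sub] := H _ B0P.
by apply/exists_inP; exists (f @^-1: C); [exact: imset_f | rewrite preim_sub].
Qed.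

End Pre.

Lemma pre_comp (T U V : finType) (f : T -> U) (k : U -> V) P :
  pre f (pre k P) = pre (k \o f) P.
Proof.
rewrite /pre -imset_comp; apply: eq_imset => B; apply/setP => x; by rewrite !inE.
Qed.

Lemma pre_ext (T U : finType) (f g : T -> U) P : f =1 g -> pre f P = pre g P.
Proof. by move=> E; apply: eq_imset => B; apply: eq_preimset. Qed.

Lemma act_partE n (g : {perm 'I_n}) P : act_part g P = pre (g^-1)%g P.
Proof.
rewrite /act_part /pre; apply: eq_imset => B.
by rewrite -{1}(invgK g) im_permV.
Qed.

Lemma pre_id (T : finType) (P : {set {set T}}) : pre id P = P.
Proof.
rewrite /pre -[RHS]imset_id; apply: eq_imset => B; apply/setP => x; by rewrite inE.
Qed.

Lemma act_chain1 n (c : {ffun 'I_n -> {set {set 'I_n}}}) : act_chain 1%g c = c.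
Proof.
apply/ffunP => r; rewrite ffunE act_partE invg1 -[RHS]pre_id.
by apply: pre_ext => x; rewrite perm1.
Qed.

Lemma act_partM n (g h : {perm 'I_n}) P :
  act_part (g * h)%g P = act_part h (act_part g P).
Proof.
rewrite !act_partE pre_comp; apply: pre_ext => x; by rewrite invMg permM.
Qed.

Lemma act_chainM n (g h : {perm 'I_n}) (c : {ffun 'I_n -> {set {set 'I_n}}}) :
  act_chain (g * h)%g c = act_chain h (act_chain g c).
Proof. by apply/ffunP => r; rewrite !ffunE act_partM. Qed.

Definition orb n (A : {set {perm 'I_n}}) (c : {ffun 'I_n -> {set {set 'I_n}}}) :=
  [set act_chain g c | g in A].

Lemma orb_eq n (A : {set {perm 'I_n}}) c d :
  (1 \in A)%g -> (forall g h, g \in A -> h \in A -> (g * h)%g \in A) ->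
  (forall g, g \in A -> (g^-1)%g \in A) ->
  (orb A c == orb A d) = [exists g in A, act_chain g c == d].
Proof.
move=> A1 AM AV; apply/eqP/exists_inP.
  move=> E; have : d \in orb A c by rewrite E; apply/imsetP; exists 1%g => //; rewrite act_chain1.
  by case/imsetP => g gA ->; exists g.
case=> g gA /eqP <-; apply/setP => x; apply/imsetP/imsetP.
  case=> k kA ->; exists (g^-1 * k)%g; first by apply: AM => //; apply: AV.
  by rewrite !act_chainM -(act_chainM g) mulgV act_chain1.
by case=> k kA ->; exists (g * k)%g; [exact: AM | rewrite act_chainM].
Qed.

Lemma leq_imset_rel (T U V : finType) (D : {set T}) (f : T -> U) (g : T -> V) :
  {in D &, forall x y, g x = g y -> f x = f y} ->
  #|f @: D| <= #|g @: D|.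
Proof.
move=> H; case: (set_0Vmem D) => [-> | [x0 x0D]].
  by have := leq_imset_card f set0; rewrite cards0 leqn0 => /eqP ->.
pose k (v : V) := f (odflt x0 [pick x in D | g x == v]).
apply: (leq_trans _ (leq_imset_card k _)); apply: subset_leq_card.
apply/subsetP => u /imsetP[y yD ->]; apply/imsetP; exists (g y); first exact: imset_f.
rewrite /k; case: pickP => [x /= /andP[xD /eqP gx] | /(_ y) /=]; last by rewrite yD eqxx.
by rewrite /= (H x y).
Qed.

Lemma card_imset_rel (T U V : finType) (D : {set T}) (f : T -> U) (g : T -> V) :
  {in D &, forall x y, (f x == f y) = (g x == g y)} ->
  #|f @: D| = #|g @: D|.
Proof.
move=> H; apply/eqP; rewrite eqn_leq !leq_imset_rel //.
  by move=> x y xD yD E; apply/eqP; rewrite -H // E.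
by move=> x y xD yD E; apply/eqP; rewrite H // E.
Qed.

Lemma count_orbits (T1 T2 : finType) (C1 : {set T1}) (C2 : {set T2})
  (O1 : T1 -> {set T1}) (O2 : T2 -> {set T2}) (F : T2 -> T1) :
  (forall x, x \in C2 -> F x \in C1) ->
  (forall y, y \in C1 -> exists2 x, x \in C2 & O1 y = O1 (F x)) ->
  {in C2 &, forall x x', (O1 (F x) == O1 (F x')) = (O2 x == O2 x')} ->
  #|O1 @: C1| = #|O2 @: C2|.
Proof.
move=> FC surj rel.
have -> : O1 @: C1 = (O1 \o F) @: C2.
  apply/eqP; rewrite eqEsubset; apply/andP; split; apply/subsetP => z /imsetP[y yC ->].
    by case: (surj y yC) => x xC ->; apply/imsetP; exists x.
  by apply/imsetP; exists (F y) => //; exact: FC.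
exact: card_imset_rel.
Qed.

Lemma chainsP n (S' : pred nat) (c : {ffun 'I_n -> {set {set 'I_n}}}) :
  reflect ((forall r : 'I_n, S' r -> partition (c r) [set: 'I_n] /\ #|c r| = n - r)
        /\ (forall r : 'I_n, ~~ S' r -> c r = set0)
        /\ (forall r r' : 'I_n, S' r -> S' r' -> r < r' -> grefines (c r) (c r')))
    (c \in chains n S').
Proof.
rewrite inE; apply: (iffP andP).
  case=> /forallP H1 /forallP H2; split; [|split].
  - by move=> r Sr; have := H1 r; rewrite Sr => /andP[-> /eqP ->].
  - by move=> r /negbTE Sr; have := H1 r; rewrite Sr => /eqP.
  - move=> r r' Sr Sr' lt; have /forallP/(_ r') := H2 r.
    by rewrite Sr Sr' lt.
case=> H1 [H2 H3]; split; apply/forallP => r.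
  case: ifP => Sr; first by case: (H1 r Sr) => -> ->; rewrite eqxx.
  by rewrite H2 ?Sr.
apply/forallP => r'; apply/implyP => /and3P[Sr Sr' lt]; exact: H3.
Qed.

Definition disc (T : finType) : {set {set T}} := [set [set x] | x : T].

Lemma card_disc (T : finType) : #|disc T| = #|T|.
Proof. by rewrite /disc card_imset //; exact: set1_inj. Qed.

Lemma disc_partition (T : finType) : partition (disc T) [set: T].
Proof.
apply/and3P; split.
- apply/eqP/setP => x; rewrite inE; apply/bigcupP; exists [set x]; last by rewrite inE.
  exact: imset_f.
- apply/trivIsetP => A B /imsetP[x _ ->] /imsetP[y _ ->] ne.
  rewrite disjoints1 inE; apply: contra ne => /eqP ->; done.
- apply/imsetP => [[x _ /esym /setP /(_ x)]]; by rewrite !inE eqxx.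
Qed.

Lemma disc_refines (T : finType) (Q : {set {set T}}) :
  cover Q = [set: T] -> grefines (disc T) Q.
Proof.
move=> cQ; apply/forall_inP => B /imsetP[x _ ->].
have : x \in cover Q by rewrite cQ inE.
by case/bigcupP => C CQ xC; apply/exists_inP; exists C; rewrite // sub1set.
Qed.

Lemma big_block (T : finType) (R : {set {set T}}) :
  partition R [set: T] -> #|R| < #|T| -> exists2 B, B \in R & 1 < #|B|.
Proof.
move=> pR lt; apply/exists_inP; apply: contraLR lt; rewrite negb_exists_in => /forall_inP H.
rewrite -leqNgt -cardsT (card_partition pR) -sum1_card.
by apply: leq_sum => B BR; rewrite leqNgt H.
Qed.

Lemma disc_unique (T : finType) (Q : {set {set T}}) :
  partition Q [set: T] -> #|Q| = #|T| -> Q = disc T.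
Proof.
move=> pQ cQ.
have s0 : set0 \notin Q by case/and3P: pQ.
have ge1 B : B \in Q -> 0 < #|B|.
  by move=> BQ; rewrite card_gt0; apply: (contraNneq _ s0) => <-.
have : \sum_(B in Q) (#|B| - 1) == 0.
  by rewrite sumnB ?sum1_card -?(card_partition pQ) ?cardsT ?cQ ?subnn.
rewrite sum_nat_eq0 => /forall_inP H1.
apply/eqP; rewrite eqEcard card_disc cQ leqnn andbT; apply/subsetP => B BQ.
have /cards1P[x ->] : #|B| == 1.
  by rewrite eqn_leq ge1 // andbT -subn_eq0 H1.
exact: imset_f.
Qed.

Section Sat.
Variables (T U : finType) (f : T -> U) (s : U -> T).
Hypothesis fK : cancel s f.

Lemma sat_pre (Q : {set {set T}}) :
  (forall C x y, C \in Q -> x \in C -> f x = f y -> y \in C) ->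
  Q = pre f [set f @: C | C : {set T} in Q].
Proof.
move=> H; rewrite /pre -imset_comp -[LHS]imset_id; apply: eq_in_imset => C CQ /=.
apply/setP => x; rewrite inE; apply/idP/imsetP => [xC | [y yC fxy]].
  by exists x.
exact: (H C y x).
Qed.

Lemma sat_refines (Q : {set {set T}}) : trivIset Q -> grefines (pre f (disc U)) Q ->
  forall C x y, C \in Q -> x \in C -> f x = f y -> y \in C.
Proof.
move=> tQ /forall_inP H C x y CQ xC fxy.
have /H /exists_inP[C' C'Q sub] : f @^-1: [set f x] \in pre f (disc U).
  by apply: imset_f; apply: imset_f.
have xC' : x \in C' by apply: (subsetP sub); rewrite !inE.
have yC' : y \in C' by apply: (subsetP sub); rewrite !inE fxy.
by rewrite -(def_pblock tQ CQ xC) (def_pblock tQ C'Q xC').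
Qed.

End Sat.

Lemma act_disc n (h : {perm 'I_n}) : act_part h (disc 'I_n) = disc 'I_n.
Proof.
apply: disc_unique; rewrite act_partE.
  by rewrite (partition_pre (permK h)) disc_partition.
by rewrite (card_pre (permK h)) card_disc.
Qed.

Lemma act_partition n (g : {perm 'I_n}) P :
  partition (act_part g P) [set: 'I_n] = partition P [set: 'I_n].
Proof. by rewrite act_partE (partition_pre (permK g)). Qed.

Lemma act_card n (g : {perm 'I_n}) P : #|act_part g P| = #|P|.
Proof. by rewrite act_partE (card_pre (permK g)). Qed.

Lemma act_refines n (g : {perm 'I_n}) P Q :
  grefines (act_part g P) (act_part g Q) = grefines P Q.
Proof. by rewrite !act_partE (refines_pre (permK g)). Qed.

Lemma act_set0 n (g : {perm 'I_n}) : act_part g set0 = set0.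
Proof. by rewrite /act_part imset0. Qed.

Lemma act_chains n S' (g : {perm 'I_n}) c :
  c \in chains n S' -> act_chain g c \in chains n S'.
Proof.
case/chainsP => H1 [H2 H3]; apply/chainsP; split; [|split].
- by move=> r Sr; rewrite ffunE act_partition act_card; exact: H1.
- by move=> r Sr; rewrite ffunE H2 // act_set0.
- by move=> r r' Sr Sr' lt; rewrite !ffunE act_refines; exact: H3.
Qed.

Lemma act_part1 n (P : {set {set 'I_n}}) : act_part 1%g P = P.
Proof.
rewrite act_partE invg1 -[RHS]pre_id; by apply: pre_ext => x; rewrite perm1.
Qed.

Section Main.
Variable m : nat.
Variable S : pred nat.
Hypothesis HS : forall s, S s -> (1 <= s) && (s <= m.+1 - 2).

Definition p (x : 'I_m.+2) : 'I_m.+1 := inord (minn x m).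
Definition io (u : 'I_m.+1) : 'I_m.+2 := lift ord_max u.

Lemma val_p x : nat_of_ord (p x) = minn x m.
Proof. by rewrite inordK // ltnS geq_minr. Qed.

Lemma val_io u : nat_of_ord (io u) = u.
Proof. exact: lift_max. Qed.

Lemma ioK : cancel io p.
Proof.
move=> u; apply: val_inj => /=; rewrite val_p val_io; have := ltn_ord u; lia.
Qed.

Lemma p_pair x y : p x = p y -> x != y -> (m <= x) && (m <= y).
Proof.
move=> /(congr1 (@nat_of_ord _)); rewrite !val_p => E ne.
have ne' : (x : nat) != y by exact: ne.
have := ltn_ord x; have := ltn_ord y; lia.
Qed.

Definition D0 := pre p (disc 'I_m.+1).

Definition F (c : {ffun 'I_m.+1 -> {set {set 'I_m.+1}}}) :
  {ffun 'I_m.+2 -> {set {set 'I_m.+2}}} :=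
  [ffun r : 'I_m.+2 => if nat_of_ord r == 1 then D0
     else if one_shift S r then pre p (c (inord r.-1)) else set0].

Lemma S_bound (s : nat) : S s -> 0 < s < m.
Proof. move/HS; lia. Qed.

Lemma val_shift (s : 'I_m.+1) : nat_of_ord (inord s.+1 : 'I_m.+2) = s.+1.
Proof. by rewrite inordK // ltnS. Qed.

Lemma Fc_shift (c : {ffun 'I_m.+1 -> {set {set 'I_m.+1}}}) (s : 'I_m.+1) : S s -> F c (inord s.+1) = pre p (c s).
Proof.
move=> Ss; have := S_bound Ss => b.
rewrite ffunE val_shift /one_shift /= Ss.
have -> : (s.+1 == 1) = false by lia.
by rewrite /= inord_val.
Qed.

Lemma one_shift_shift (s : 'I_m.+1) : S s -> one_shift S (inord s.+1 : 'I_m.+2).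
Proof. by move=> Ss; rewrite /one_shift val_shift /= Ss orbT. Qed.

Lemma F_chain (c : {ffun 'I_m.+1 -> {set {set 'I_m.+1}}}) : c \in chains m.+1 S -> F c \in chains m.+2 (one_shift S).
Proof.
case/chainsP => H1 [H2 H3]; apply/chainsP; split; [|split].
- move=> r Sr; rewrite ffunE; case: ifP => r1.
    rewrite /D0 (partition_pre ioK) (card_pre ioK) card_disc card_ord disc_partition.
    by split => //; move/eqP: r1 => ->.
  rewrite Sr; move: Sr; rewrite /one_shift r1 /= => /andP[r0 Sr1].
  have vr : nat_of_ord (inord r.-1 : 'I_m.+1) = r.-1 by rewrite inordK //; have := ltn_ord r; lia.
  have [] := H1 (inord r.-1); first by rewrite vr.
  rewrite (partition_pre ioK) (card_pre ioK) vr => -> ->; split => //.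
  have := ltn_ord r; lia.
- move=> r; rewrite /one_shift negb_or => /andP[r1 Sr]; rewrite ffunE.
  by rewrite /one_shift (negbTE r1) (negbTE Sr).
- move=> r r' Sr Sr' lt; rewrite !ffunE.
  have r'1 : (nat_of_ord r' == 1) = false.
    move: Sr; rewrite /one_shift; case/orP; [move/eqP=> E|move/andP=>[r0 _]]; lia.
  rewrite r'1 Sr'; move: Sr' Sr; rewrite /one_shift r'1 /= => /andP[r'0 Sr'1].
  have vr' : nat_of_ord (inord r'.-1 : 'I_m.+1) = r'.-1 by rewrite inordK //; have := ltn_ord r'; lia.
  case: ifP => r1 => [_|].
    rewrite /D0 (refines_pre ioK); apply: disc_refines.
    by case: (H1 (inord r'.-1)) => [|/cover_partition]; rewrite ?vr'.
  rewrite r1 /= => /andP[r0 Sr1].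
  rewrite Sr1 r0 (refines_pre ioK).
  have vr : nat_of_ord (inord r.-1 : 'I_m.+1) = r.-1 by rewrite inordK //; have := ltn_ord r; lia.
  apply: H3; rewrite ?vr ?vr' //; lia.
Qed.

Lemma F_chain_rev (c : {ffun 'I_m.+1 -> {set {set 'I_m.+1}}}) :
  (forall s : 'I_m.+1, ~~ S s -> c s = set0) ->
  F c \in chains m.+2 (one_shift S) -> c \in chains m.+1 S.
Proof.
move=> H0 /chainsP[H1 [H2 H3]]; apply/chainsP; split; [|split] => //.
- move=> s Ss; have [] := H1 _ (one_shift_shift Ss).
  by rewrite Fc_shift // (partition_pre ioK) (card_pre ioK) val_shift subSS => -> ->.
- move=> s s' Ss Ss' lt; rewrite -(refines_pre ioK) -!Fc_shift //.
  by apply: H3; rewrite ?one_shift_shift // !val_shift.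
Qed.

Lemma F_inj (c c' : {ffun 'I_m.+1 -> {set {set 'I_m.+1}}}) : c \in chains m.+1 S -> c' \in chains m.+1 S -> F c = F c' -> c = c'.
Proof.
move=> /chainsP[_ [H2 _]] /chainsP[_ [H2' _]] E; apply/ffunP => s.
case Ss: (S s); last by rewrite H2 ?H2' ?Ss.
apply: (pre_inj ioK); by rewrite -!Fc_shift // E.
Qed.

Lemma F_act (g : {perm 'I_m.+2}) (h : {perm 'I_m.+1}) c :
  (forall x, p (g x) = h (p x)) -> act_chain g (F c) = F (act_chain h c).
Proof.
move=> E.
have key P : act_part g (pre p P) = pre p (act_part h P).
  rewrite !act_partE !pre_comp; apply: pre_ext => x /=.
  by apply: (@perm_inj _ h); rewrite -E !permKV.
apply/ffunP => r; rewrite !ffunE.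
case: ifP => _; first by rewrite /D0 key act_disc.
case: ifP => _; first by rewrite key.
by rewrite /act_part imset0.
Qed.


Lemma stabP (h : {perm 'I_m.+1}) : (h \in stab_last m.+1) = (h ord_max == ord_max).
Proof.
rewrite inE; apply/forallP/eqP => [H | H x].
  by have := H ord_max; rewrite eqxx /= => /eqP.
apply/implyP => /eqP xm; have -> : x = ord_max by apply: val_inj.
by rewrite H.
Qed.

Lemma p_max : p ord_max = ord_max.
Proof. apply: val_inj => /=; rewrite val_p /=; lia. Qed.

Lemma extend (h : {perm 'I_m.+1}) : h \in stab_last m.+1 ->
  exists g : {perm 'I_m.+2}, forall x, p (g x) = h (p x).
Proof.
rewrite stabP => /eqP hm; exists (lift_perm ord_max ord_max h) => x.
case: (unliftP ord_max x) => [k -> | ->].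
  rewrite lift_perm_lift; have := ioK k; have := ioK (h k); rewrite /io => -> -> //.
by rewrite lift_perm_id p_max hm.
Qed.

Lemma fib (g : {perm 'I_m.+2}) : act_part g D0 = D0 ->
  forall x y, p x = p y -> p (g x) = p (g y).
Proof.
move=> E x y pxy.
have : [set g z | z in p @^-1: [set p x]] \in D0.
  rewrite -E /act_part; apply: imset_f; rewrite /D0 /pre; apply: imset_f.
  by apply: imset_f.
case/imsetP => B /imsetP[u _ ->] EB.
have gx : g x \in p @^-1: [set u] by rewrite -EB; apply: imset_f; rewrite !inE.
have gy : g y \in p @^-1: [set u] by rewrite -EB; apply: imset_f; rewrite !inE pxy.
by move: gx gy; rewrite !inE => /eqP -> /eqP ->.
Qed.

Lemma restrict (g : {perm 'I_m.+2}) : act_part g D0 = D0 ->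
  exists2 h, h \in stab_last m.+1 & forall x, p (g x) = h (p x).
Proof.
move=> E.
have E' : act_part g^-1 D0 = D0 by rewrite -{1}E -act_partM mulgV act_part1.
pose h0 u := p (g (io u)).
have h0inj : injective h0.
  by move=> u v huv; have := fib E' huv; rewrite !permK !ioK.
exists (perm h0inj).
  rewrite stabP permE /h0; apply/eqP/val_inj => /=; rewrite val_p.
  have pe : p (io ord_max) = p ord_max by rewrite ioK p_max.
  have ne : g (io ord_max) != g ord_max.
    rewrite (inj_eq perm_inj); apply/eqP => /(congr1 (@nat_of_ord _)).
    rewrite val_io /=; lia.
  have /andP[mx _] := p_pair (fib E pe) ne.
  lia.
move=> x; rewrite permE /h0; apply/esym/fib => //; by rewrite ioK.
Qed.

Lemma surj c1 : c1 \in chains m.+2 (one_shift S) ->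
  exists2 c2, c2 \in chains m.+1 S & exists g, act_chain g c1 = F c2.
Proof.
move=> c1C.
pose one : 'I_m.+2 := inord 1.
have v1 : nat_of_ord one = 1 by rewrite inordK.
have os1 : one_shift S one by rewrite /one_shift v1.
have [pR cR] : partition (c1 one) [set: 'I_m.+2] /\ #|c1 one| = m.+2 - one.
  by case/chainsP: c1C => H1 _; apply: H1.
have /(big_block pR)[B BR] : #|c1 one| < #|'I_m.+2| by rewrite cR card_ord v1 subn1.
case/card_gt1P => a [b [aB bB ab]].
pose m1 := io ord_max; pose mN : 'I_m.+2 := ord_max.
have m1N : m1 != mN.
  by apply/eqP => /(congr1 (@nat_of_ord _)); rewrite val_io /= => /eqP; rewrite -[m.+1]addn1 -{1}[m]addn0 eqn_add2l.
pose g1 := tperm a m1; pose b' := g1 b.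
have b'm1 : b' != m1.
  have : g1 b != g1 a by rewrite (inj_eq perm_inj) eq_sym.
  by rewrite /g1 tpermL.
pose g2 := tperm b' mN; pose g := (g1 * g2)%g.
pose c1' := act_chain g c1.
have c1'C : c1' \in chains m.+2 (one_shift S) by apply: act_chains.
case/chainsP: (c1'C) => H1 [H2 H3].
pose R' := c1' one.
have R'E : R' = act_part g2 (act_part g1 (c1 one)) by rewrite /R' /c1' ffunE act_partM.
pose B'' := [set g2 x | x in [set g1 x | x in B]].
have B''R : B'' \in R' by rewrite R'E; apply: imset_f; apply: imset_f.
have m1B : m1 \in B''.
  have <- : g2 (g1 a) = m1 by rewrite /g1 tpermL /g2 tpermD // eq_sym.
  by apply: imset_f; apply: imset_f.
have mNB : mN \in B''.
  have <- : g2 (g1 b) = mN by rewrite /g2 -/b' tpermL.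
  by apply: imset_f; apply: imset_f.
have [pR' cR'] := H1 one os1.
have tR' := partition_trivIset pR'.
have fibR' : forall C x y, C \in R' -> x \in C -> p x = p y -> y \in C.
  move=> C x y CR xC pxy; case: (eqVneq x y) => [<- // | ne].
  case/andP: (p_pair pxy ne) => mx my.
  have inB (z : 'I_m.+2) : m <= z -> z \in B''.
    move=> mz; have : (z : nat) = m \/ (z : nat) = m.+1 by move: (ltn_ord z) mz; clear; lia.
    case=> Ez.
      by have -> : z = m1 by apply: val_inj; rewrite /= Ez; symmetry; exact: (val_io ord_max).
    by have -> : z = mN by apply: val_inj => /=; rewrite Ez.
  have CB : C = B'' by rewrite -(def_pblock tR' CR xC) (def_pblock tR' B''R (inB x mx)).
  by rewrite CB inB.
have Rsat : R' = pre p [set p @: C | C : {set 'I_m.+2} in R'] := sat_pre fibR'.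
have RD0 : R' = D0.
  rewrite Rsat /D0; congr (pre p _); apply: disc_unique.
    by rewrite -(partition_pre ioK) -Rsat.
  by rewrite -(card_pre ioK) -Rsat cR' card_ord v1.
have sat_r : forall r : 'I_m.+2, one_shift S r -> c1' r = pre p [set p @: C | C : {set 'I_m.+2} in c1' r].
  move=> r Sr; case r1 : (nat_of_ord r == 1).
    have -> : r = one by apply: val_inj => /=; rewrite v1; apply/eqP.
    exact: Rsat.
  have [pr _] := H1 r Sr.
  apply: sat_pre; apply: (sat_refines (partition_trivIset pr)).
  have : grefines R' (c1' r); last by rewrite RD0.
  apply: H3 => //; rewrite v1.
  by move: Sr; rewrite /one_shift r1 /= => /andP[r0 _]; move/negbT: r1; move: r0; clear; lia.
pose c2 := [ffun s : 'I_m.+1 => if S s then [set p @: C | C : {set 'I_m.+2} in c1' (inord s.+1)] else set0].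
have Fc2 : F c2 = c1'.
  apply/ffunP => r; rewrite ffunE; case: ifP => r1.
    have -> : r = one by apply: val_inj => /=; rewrite v1; apply/eqP.
    by rewrite -RD0.
  case: ifP => Sr; last by rewrite H2 // Sr.
  move: (Sr); rewrite /one_shift r1 /= => /andP[r0 Sr1].
  have vr : nat_of_ord (inord r.-1 : 'I_m.+1) = r.-1.
    by rewrite inordK //; move: (ltn_ord r); clear; lia.
  rewrite ffunE vr Sr1 prednK // inord_val.
  by rewrite -sat_r.
have c2C : c2 \in chains m.+1 S.
  apply: F_chain_rev; last by rewrite Fc2.
  by move=> s Ss; rewrite ffunE (negbTE Ss).
by exists c2 => //; exists g; rewrite Fc2.
Qed.

Lemma main_m : a_S (one_shift S) m.+2 = a'_S S m.+1.
Proof.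
rewrite /a_S /a'_S /num_orbits.
have stab1 : (1 \in stab_last m.+1)%g by rewrite stabP perm1.
have stabM : forall g h, g \in stab_last m.+1 -> h \in stab_last m.+1 -> (g * h)%g \in stab_last m.+1.
  by move=> g h; rewrite !stabP permM => /eqP -> /eqP ->.
have stabV : forall g, g \in stab_last m.+1 -> (g^-1)%g \in stab_last m.+1.
  by move=> g; rewrite !stabP => /eqP hm; rewrite -{1}hm permK.
have T1 : (1 \in [set: {perm 'I_m.+2}])%g by rewrite inE.
have TM : forall g h : {perm 'I_m.+2}, g \in setT -> h \in setT -> (g * h)%g \in setT.
  by move=> *; rewrite inE.
have TV : forall g : {perm 'I_m.+2}, g \in setT -> (g^-1)%g \in setT.
  by move=> *; rewrite inE.
apply: (@count_orbits _ _ _ _ (orb setT) (orb (stab_last m.+1)) F).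
- exact: F_chain.
- move=> c1 /surj[c2 c2C [g E]]; exists c2 => //; apply/eqP.
  rewrite orb_eq //; apply/exists_inP; exists g; rewrite ?inE ?E //.
- move=> c c' cC c'C; rewrite !orb_eq //; apply/exists_inP/exists_inP.
    case=> g _ /eqP E.
    pose one : 'I_m.+2 := inord 1.
    have v1 : nat_of_ord one = 1 by rewrite inordK.
    have EA : act_part g D0 = D0.
      by move/ffunP: E => /(_ one); rewrite !ffunE v1 /=.
    case: (restrict EA) => h hst hc; exists h => //; apply/eqP.
    apply: F_inj => //; first exact: act_chains.
    by rewrite -(F_act _ hc).
  case=> h hst /eqP E; case: (extend hst) => g Eg; exists g; first by rewrite inE.
  by rewrite (F_act _ Eg) E.
Qed.

End Main.

Theorem mainTheorem2 (n : nat) (S : pred nat) :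
  3 <= n ->
  (exists s, S s) ->
  (forall s, S s -> (1 <= s) && (s <= n - 2)) ->
  a_S (one_shift S) n.+1 = a'_S S n.
Proof.
case: n => [//|m] _ _ HS; exact: main_m HS.
Qed.
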